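(* Fix integers $N\ge 2$ and $K\ge 1$. Let $\mathcal{M}$ be any set of scoring tensors in $\mathbb{R}^{N\times N\times K}$ such that each $\mathcal{S}\in\mathcal{M}$ is the scoring tensor of a bilinear model of some size $r<N/32$, i.e. there exist $\mathbf{A}\in\mathbb{R}^{N\times r}$ and $\mathbf{R}_1,\dots,\mathbf{R}_K\in\mathbb{R}^{r\times r}$ with $[\mathcal{S}]_{ijk}=\mathbf{a}_i^T\mathbf{R}_k\mathbf{a}_j$ for all $i,j,k$. Then $\mathcal{M}$ is not universal, i.e. $\pi(\mathcal{M})\ne\pi(\mathbb{R}^{N\times N\times K})$.
   Context: For a real $N\times N$ matrix $\mathbf{S}$, $\pi(\mathbf{S})$ is the matrix of dense ranks: $\pi_{ij}(\mathbf{S})=1+$ (number of distinct values among entries of $\mathbf{S}$ strictly larger than $s_{ij}$). For a tensor in $\mathbb{R}^{N\times N\times K}$, $\pi$ is applied to each frontal slice (the $N\times N$ matrices obtained by fixing the third index); for a set $X$, $\pi(X)=\{\pi(x):x\in X\}$. $\mathbf{a}_i$ denotes the $i$-th row of $\mathbf{A}$. *)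

(* Defs.v *)
From HB Require Import structures.
From mathcomp Require Import all_boot all_order all_algebra.
From mathcomp Require Import boolp classical_sets reals.
Set Implicit Arguments. Unset Strict Implicit. Unset Printing Implicit Defensive.
Import Order.TTheory GRing.Theory Num.Theory.
Local Open Scope ring_scope.

(* A tensor in R^{N x N x K}, given by its K frontal slices (N x N matrices):
   the slice k is  T k,  and  [T]_{ijk} = T k i j. *)
Definition tensor (R : realType) (N K : nat) := {ffun 'I_K -> 'M[R]_N}.

Definition dense_rank (R : realType) (N : nat) (S : 'M[R]_N) : 'M[nat]_N :=
  \matrix_(i, j)
    (size (undup [seq S p.1 p.2 | p <- enum {: 'I_N * 'I_N} & (S i j < S p.1 p.2)%R])).+1%N.

Definition pi_tensor (R : realType) (N K : nat) (T : tensor R N K)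
  : {ffun 'I_K -> 'M[nat]_N} := [ffun k => dense_rank (T k)].

Definition pi_set (R : realType) (N K : nat) (X : set (tensor R N K))
  : set {ffun 'I_K -> 'M[nat]_N} := [set pi_tensor T | T in X].

Definition bilinear_of_size (R : realType) (N K r : nat) (S : tensor R N K) : Prop :=
  exists (A : 'M[R]_(N, r)) (Rk : 'I_K -> 'M[R]_r),
    forall (i j : 'I_N) (k : 'I_K),
      S k i j = (row i A *m Rk k *m (row j A)^T) 0 0.

(* Main.v *)
Require Import Defs.
From HB Require Import structures.
From mathcomp Require Import all_boot all_order all_algebra.
From mathcomp Require Import boolp classical_sets reals.
From mathcomp Require Import zify.
Set Implicit Arguments. Unset Strict Implicit. Unset Printing Implicit Defensive.
Import Order.TTheory GRing.Theory Num.Theory.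
Local Open Scope ring_scope.

Lemma dr_mono (R : realType) N (S : 'M[R]_N) i j i' j' :
  S i j < S i' j' -> (dense_rank S i' j' < dense_rank S i j)%N.
Proof.
move=> lt; rewrite !mxE ltnS.
set y := S i' j'.
apply: (@leq_trans (size (y :: undup [seq S p.1 p.2 | p <- enum {: 'I_N * 'I_N} & (y < S p.1 p.2)%R]))) => //.
apply: uniq_leq_size.
- rewrite /= undup_uniq andbT mem_undup; apply/negP => /mapP [p].
  rewrite mem_filter => /andP [hp _] eq; by rewrite eq ltxx in hp.
- move=> z; rewrite inE => /orP [/eqP ->|].
    rewrite mem_undup; apply/mapP; exists (i', j') => //.
    by rewrite mem_filter lt mem_enum.
  rewrite mem_undup => /mapP [p]; rewrite mem_filter => /andP [hp hp2] ->.
  rewrite mem_undup; apply/mapP; exists p => //.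
  by rewrite mem_filter hp2 (lt_trans lt hp).
Qed.

Lemma dr_eq (R : realType) N (S : 'M[R]_N) i j i' j' :
  S i j = S i' j' -> dense_rank S i j = dense_rank S i' j'.
Proof. by rewrite !mxE => ->. Qed.

Lemma dr_inj (R : realType) N (S : 'M[R]_N) i j i' j' :
  dense_rank S i j = dense_rank S i' j' -> S i j = S i' j'.
Proof.
move=> e; case: (ltgtP (S i j) (S i' j')) => // h.
- by have := dr_mono h; rewrite e ltnn.
- by have := dr_mono h; rewrite e ltnn.
Qed.

Lemma dr_lt (R : realType) N (S : 'M[R]_N) i j i' j' :
  (dense_rank S i j < dense_rank S i' j')%N -> S i' j' < S i j.
Proof.
move=> e; case: (ltgtP (S i' j') (S i j)) => // h.
- by have := dr_mono h; rewrite ltnNge (ltnW e).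
- by move: e; rewrite (dr_eq h) ltnn.
Qed.

Theorem corollary3 (R : realType) (N K : nat) (hN : (2 <= N)%N) (hK : (1 <= K)%N)
  (M : set (tensor R N K)) :
  (forall S, M S -> exists r : nat, (r%:R < N%:R / 32 :> R) /\ bilinear_of_size r S) ->
  pi_set M <> pi_set [set: tensor R N K].
Proof.
move=> HM Heq.
pose T0 : tensor R N K := [ffun k => 1%:M].
have : pi_set M (pi_tensor T0) by rewrite Heq; exists T0.
case=> T MT hT.
have [r [hr [A [Rk HA]]]] := HM T MT.
pose k0 : 'I_K := Ordinal hK.
have hd : dense_rank (T k0) = dense_rank (1%:M : 'M[R]_N).
  by have := congr1 (fun f : {ffun _ -> _} => f k0) hT; rewrite /= !ffunE.
set X := T k0 in hd.
pose i0 : 'I_N := Ordinal (ltnW hN).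
pose i1 : 'I_N := Ordinal hN.
have n01 : i0 != i1 by [].
have Xdiag i : X i i = X i0 i0.
  by apply: dr_inj; rewrite hd; apply: dr_eq; rewrite !mxE !eqxx.
have Xoff i j : i != j -> X i j = X i0 i1.
  by move=> h; apply: dr_inj; rewrite hd; apply: dr_eq; rewrite !mxE (negbTE h) (negbTE n01).
have Xlt : X i0 i1 < X i0 i0.
  by apply: dr_lt; rewrite hd; apply: dr_mono; rewrite !mxE eqxx (negbTE n01) /= ltr01.
set a := X i0 i0 in Xdiag Xlt; set b := X i0 i1 in Xoff Xlt.
have hX : X = (a - b)%:M + const_mx b.
  apply/matrixP => i j; rewrite !mxE; case: eqVneq => [->|h].
    by rewrite Xdiag mulr1n subrK.
  by rewrite Xoff // mulr0n add0r.
have hXA : X = A *m Rk k0 *m A^T.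
  apply/matrixP => i j; rewrite /X HA !mxE; apply: eq_bigr => l _; rewrite !mxE.
  congr (_ * _); apply: eq_bigr => m _; by rewrite !mxE.
have h1 : (\rank X <= r)%N.
  rewrite hXA; exact: leq_trans (mxrankM_maxl _ _) (leq_trans (mxrankM_maxl _ _) (rank_leq_col A)).
have hc : (\rank (const_mx b : 'M[R]_N) <= 1)%N.
  have -> : (const_mx b : 'M[R]_N) = (const_mx b : 'cV_N) *m (const_mx 1 : 'rV_N).
    by apply/matrixP => i j; rewrite !mxE big_ord1 !mxE mulr1.
  exact: leq_trans (mxrankM_maxr _ _) (rank_leq_row _).
have h2 : (N <= \rank X + 1)%N.
  have hab : a - b != 0 by rewrite subr_eq0 gt_eqF.
  have hN' : \rank ((a - b)%:M : 'M[R]_N) = N by rewrite -scalemx1 mxrank_scale_nz // mxrank1.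
  apply: (leq_trans (eq_leq (esym hN'))).
  have -> : ((a - b)%:M : 'M[R]_N) = X + - const_mx b by rewrite hX addrK.
  apply: leq_trans (mxrank_add _ _) _; rewrite mxrank_opp; exact: leq_add.
have h3 : (r * 32 < N)%N.
  by rewrite -(ltr_nat R) natrM -ltr_pdivlMr.
lia.
Qed.
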